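(* Let $\Sigma_2=\{a,b\}$ and $\Sigma_1=\{c\}$. Then: (1) there exists an embedding from $\mathrm{sg}(\Sigma_1)\times\mathrm{sg}(\Sigma_1)$ into $\mathrm{UT}(2,\mathbb{N})$; (2) there exists an embedding from $\mathrm{fg}(\Sigma_2)\times\mathrm{fg}(\Sigma_1)$ into $\mathbb{Q}^{2\times2}$; (3) there exists an embedding from $\mathrm{sg}(\Sigma_2)\times\mathrm{fg}(\Sigma_1)$ into $\mathbb{Z}^{3\times3}$; (4) there exists an embedding from $\mathrm{fg}(\Sigma_2)\times\mathrm{sg}(\Sigma_1)$ into $\mathbb{Z}^{2\times2}$.
   Context: For an alphabet $\Sigma$, $\mathrm{sg}(\Sigma)$ is the free monoid of finite words over $\Sigma$ (including the empty word $\varepsilon$) under concatenation, and $\mathrm{fg}(\Sigma)$ is the free group on $\Sigma$ (reduced words over $\Sigma\cup\Sigma^{-1}$). Products such as $\mathrm{sg}(\Sigma_2)\times\mathrm{fg}(\Sigma_1)$ carry componentwise multiplication. For $\mathbb{K}\in\{\mathbb{N},\mathbb{Z},\mathbb{Q}\}$, $\mathbb{K}^{n\times n}$ is the multiplicative semigroup of $n\times n$ matrices with entries in $\mathbb{K}$, and $\mathrm{UT}(2,\mathbb{N})$ is the semigroup of $2\times2$ upper triangular matrices with entries in $\mathbb{N}$. An embedding is a map $\varphi$ with $\varphi(uv)=\varphi(u)\varphi(v)$ for all $u,v$ that is injective. *)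

(* Defs.v *)
From HB Require Import structures.
From mathcomp Require Import all_boot all_order all_algebra.
Set Implicit Arguments. Unset Strict Implicit. Unset Printing Implicit Defensive.
Import GRing.Theory.
Local Open Scope ring_scope.

Inductive Sigma2 := sa | sb.
Inductive Sigma1 := sc.

Definition Sigma2_eqb (x y : Sigma2) : bool :=
  match x, y with sa, sa | sb, sb => true | _, _ => false end.
Lemma Sigma2_eqP : Equality.axiom Sigma2_eqb.
Proof. by case; case; constructor. Qed.
HB.instance Definition _ := hasDecEq.Build Sigma2 Sigma2_eqP.

Definition Sigma1_eqb (x y : Sigma1) : bool := true.
Lemma Sigma1_eqP : Equality.axiom Sigma1_eqb.
Proof. by case; case; constructor. Qed.
HB.instance Definition _ := hasDecEq.Build Sigma1 Sigma1_eqP.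

Definition sg (S : Type) := seq S.
Definition sg_valid (S : Type) (w : sg S) : Prop := True.
Definition sg_mul (S : Type) (u v : sg S) : sg S := u ++ v.

(** Free group fg(S): words over S ∪ S^{-1}, a letter being (x, e) with
    e = true meaning x^{-1}.  Elements are the reduced words; the product
    is free reduction of the concatenation. *)
Definition fg (S : eqType) := seq (S * bool).

Definition fg_push (S : eqType) (l : S * bool) (w : fg S) : fg S :=
  match w with
  | l' :: w' => if (l'.1 == l.1) && (l'.2 != l.2) then w' else l :: w
  | [::] => [:: l]
  end.

Definition fg_reduce (S : eqType) (w : fg S) : fg S := foldr (@fg_push S) [::] w.

Fixpoint fg_reduced (S : eqType) (w : fg S) : bool :=
  match w with
  | l :: ((l' :: _) as w') =>
      ~~ ((l.1 == l'.1) && (l.2 != l'.2)) && fg_reduced w'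
  | _ => true
  end.

Definition fg_valid (S : eqType) (w : fg S) : Prop := fg_reduced w.
Definition fg_mul (S : eqType) (u v : fg S) : fg S := fg_reduce (u ++ v).

Definition prod_valid (A B : Type) (vA : A -> Prop) (vB : B -> Prop)
  (x : A * B) : Prop := vA x.1 /\ vB x.2.
Definition prod_mul (A B : Type) (mA : A -> A -> A) (mB : B -> B -> B)
  (x y : A * B) : A * B := (mA x.1 y.1, mB x.2 y.2).

Definition is_embedding (A M : Type) (vA : A -> Prop) (mA : A -> A -> A)
  (inM : M -> Prop) (mM : M -> M -> M) (phi : A -> M) : Prop :=
  [/\ (forall u, vA u -> inM (phi u)),
      (forall u v, vA u -> vA v -> phi (mA u v) = mM (phi u) (phi v))
    & (forall u v, vA u -> vA v -> phi u = phi v -> u = v)].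

Definition is_UT2 (A : 'M[nat]_2) : Prop := A 1 0 = 0%N.

Definition mxmul (R : pzSemiRingType) (n : nat) (A B : 'M[R]_n) : 'M[R]_n := A *m B.

(* Main.v *)
Require Import Defs.
From mathcomp Require Import all_boot all_order all_algebra zify ring lra.
Set Implicit Arguments. Unset Strict Implicit. Unset Printing Implicit Defensive.
Import GRing.Theory Num.Theory.
Local Open Scope ring_scope.

Record m2 (R : Type) := M2 { e00 : R; e01 : R; e10 : R; e11 : R }.

Section M2.
Variable R : comPzSemiRingType.
Definition mul2 (x y : m2 R) : m2 R :=
  M2 (e00 x * e00 y + e01 x * e10 y) (e00 x * e01 y + e01 x * e11 y)
     (e10 x * e00 y + e11 x * e10 y) (e10 x * e01 y + e11 x * e11 y).
Definition I2 : m2 R := M2 1 0 0 1.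
Lemma mul2A x y z : mul2 x (mul2 y z) = mul2 (mul2 x y) z.
Proof. case: x y z => [a b c d] [a' b' c' d'] [a'' b'' c'' d'']; rewrite /mul2 /=; congr M2; ring. Qed.
Lemma mul1m2 x : mul2 I2 x = x.
Proof. case: x => [a b c d]; rewrite /mul2 /=; congr M2; ring. Qed.
Lemma mulm21 x : mul2 x I2 = x.
Proof. case: x => [a b c d]; rewrite /mul2 /=; congr M2; ring. Qed.

Definition mx2 (x : m2 R) : 'M[R]_2 :=
  \matrix_(i < 2, j < 2) if (i : nat) == 0%N then (if (j : nat) == 0%N then e00 x else e01 x)
                         else (if (j : nat) == 0%N then e10 x else e11 x).
Lemma mx2M x y : mx2 (mul2 x y) = mx2 x *m mx2 y.
Proof.
apply/matrixP => i j; rewrite !mxE big_ord_recr big_ord_recr big_ord0 /= !mxE add0r.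
by case: i => [[|[|//]] ?]; case: j => [[|[|//]] ?].
Qed.
Lemma mx2_inj : injective mx2.
Proof.
move=> [a b c d] [a' b' c' d'] /matrixP H.
have := H 0 0; have := H 0 1; have := H 1 0; have := H 1 1; rewrite !mxE /=.
by move=> -> -> -> ->.
Qed.
End M2.

Definition det2 (x : m2 int) : int := e00 x * e11 x - e01 x * e10 x.
Lemma det2M x y : det2 (mul2 x y) = det2 x * det2 y.
Proof. case: x y => [a b c d] [a' b' c' d']; rewrite /det2 /mul2 /=; ring. Qed.

Definition L (l : Sigma2 * bool) : m2 int :=
  match l with
  | (sa, false) => M2 1 2 0 1
  | (sa, true) => M2 1 (-2) 0 1
  | (sb, false) => M2 1 0 2 1
  | (sb, true) => M2 1 0 (-2) 1
  end.

Lemma L_inv s e : mul2 (L (s, ~~ e)) (L (s, e)) = I2 _.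
Proof. by case: s; case: e; rewrite /mul2 /I2 /=; congr M2. Qed.

Lemma L_inv2 s e : mul2 (L (s, e)) (L (s, ~~ e)) = I2 _.
Proof. by case: s; case: e; rewrite /mul2 /I2 /=; congr M2. Qed.

Definition S2 (w : fg Sigma2) : m2 int := foldr (fun l M => mul2 (L l) M) (I2 _) w.

Lemma S2_push l w : S2 (fg_push l w) = mul2 (L l) (S2 w).
Proof.
case: w => [|l' w] /=; first by rewrite mulm21.
case: ifP => // /andP [/eqP h1 h2].
case: l l' h1 h2 => s e [s' e'] /= -> h2.
have -> : e' = ~~ e by move: h2; case: e; case: e'.
by rewrite mul2A L_inv2 mul1m2.
Qed.

Lemma S2_reduce w : S2 (fg_reduce w) = S2 w.
Proof. by elim: w => //= l w IH; rewrite S2_push IH. Qed.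

Lemma S2_cat u v : S2 (u ++ v) = mul2 (S2 u) (S2 v).
Proof. by elim: u => /= [|l u IH]; rewrite ?mul1m2 // IH mul2A. Qed.

Lemma S2_mul u v : S2 (fg_mul u v) = mul2 (S2 u) (S2 v).
Proof. by rewrite /fg_mul S2_reduce S2_cat. Qed.

Lemma S2_det w : det2 (S2 w) = 1.
Proof. elim: w => //= l w IH; rewrite det2M IH mulr1; by case: l => [[] []]. Qed.

Definition Par (x : m2 int) : Prop :=
  exists k l m n, [/\ e00 x = 2 * k + 1, e01 x = 2 * l, e10 x = 2 * m & e11 x = 2 * n + 1].

Lemma S2_par w : Par (S2 w).
Proof.
elim: w => /= [|[s e] w [k [l [m [n [h1 h2 h3 h4]]]]]].
  by exists 0, 0, 0, 0; split.
case: s; case: e; rewrite /mul2 /= h1 h2 h3 h4.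
- by exists (k - 2 * m), (l - 2 * n - 1), m, n; split => /=; ring.
- by exists (k + 2 * m), (l + 2 * n + 1), m, n; split => /=; ring.
- by exists k, l, (m - 2 * k - 1), (n - 2 * l); split => /=; ring.
- by exists k, l, (m + 2 * k + 1), (n + 2 * l); split => /=; ring.
Qed.

Definition sgnc (e : bool) (x : int) : Prop := if e then x < 0 else 0 < x.
Definition InvA e (M : m2 int) : Prop :=
  let: M2 a b c d := M in
  (c*c <= d*d /\ d*d < b*b /\ sgnc e (b*d)) \/ (d*d <= c*c /\ c*c < a*a /\ sgnc e (a*c)).
Definition InvB e (M : m2 int) : Prop :=
  let: M2 a b c d := M in
  (a*a <= b*b /\ b*b < d*d /\ sgnc e (d*b)) \/ (b*b <= a*a /\ a*a < c*c /\ sgnc e (c*a)).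
Definition Inv (x : Sigma2 * bool) M :=
  match x with (sa, e) => InvA e M | (sb, e) => InvB e M end.

Ltac solve_inv :=
  first [ left; split; [nia|split; nia] | right; split; [nia|split; nia] ].

Lemma inv_same x M : Inv x M -> Inv x (mul2 (L x) M).
Proof.
case: M => a b c d; case: x => [[] []]; rewrite /Inv /InvA /InvB /mul2 /sgnc /=;
  case=> [[h1 [h2 h3]]|[h1 [h2 h3]]]; solve_inv.
Qed.

Lemma inv_crossA e e' M : InvB e' M -> InvA e (mul2 (L (sa, e)) M).
Proof.
case: M => a b c d; case: e; case: e'; rewrite /InvA /InvB /mul2 /sgnc /=.
all: have [h|h] : c*c <= d*d \/ d*d <= c*c by lia.
all: case=> [[h1 [h2 h3]]|[h1 [h2 h3]]]; solve_inv.
Qed.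

Lemma inv_crossB e e' M : InvA e' M -> InvB e (mul2 (L (sb, e)) M).
Proof.
case: M => a b c d; case: e; case: e'; rewrite /InvA /InvB /mul2 /sgnc /=.
all: have [h|h] : a*a <= b*b \/ b*b <= a*a by lia.
all: case=> [[h1 [h2 h3]]|[h1 [h2 h3]]]; solve_inv.
Qed.

Lemma inv_L x : Inv x (L x).
Proof. case: x => [[] []]; rewrite /Inv /InvA /InvB /sgnc /=; solve_inv. Qed.

Lemma inv_I x : ~ Inv x (I2 _).
Proof. case: x => [[] []]; rewrite /Inv /InvA /InvB /sgnc /=; lia. Qed.

Lemma S2_inv x w : fg_reduced (x :: w) -> Inv x (S2 (x :: w)).
Proof.
elim: w x => [|y w IH] x /=; first by rewrite mulm21 => _; exact: inv_L.
move=> /andP [hxy /IH].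
case: x y hxy => [s e] [s' e'] hxy; rewrite /= in hxy.
case: s hxy; case: s' => hxy.
- have -> : e' = e by move: hxy; case: e; case: e'.
  exact: inv_same.
- by apply: inv_crossA.
- by apply: inv_crossB.
- have -> : e' = e by move: hxy; case: e; case: e'.
  exact: inv_same.
Qed.

Lemma inv_uniq x y M : Par M -> Inv x M -> Inv y M -> x = y.
Proof.
case: M => a b c d [k [l [m [n [/= h1 h2 h3 h4]]]]]; subst.
case: x => [[] []]; case: y => [[] []] //; rewrite /Inv /InvA /InvB /sgnc /=; nia.
Qed.

Lemma reduced_tail (S : eqType) (x : S * bool) w : fg_reduced (x :: w) -> fg_reduced w.
Proof. by case: w => //= y w /andP []. Qed.

Lemma S2_inj u v : fg_reduced u -> fg_reduced v -> S2 u = S2 v -> u = v.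
Proof.
elim: u v => [|x u IH] [|y v] //.
- move=> _ hv h; exfalso; have := S2_inv hv; rewrite -h; exact: inv_I.
- move=> hu _ h; exfalso; have := S2_inv hu; rewrite h; exact: inv_I.
move=> hu hv h.
have hx := S2_inv hu; have hy := S2_inv hv.
have exy : x = y by apply: (inv_uniq (S2_par (x :: u))) => //; rewrite h.
subst y; congr (_ :: _); apply: IH; first exact: reduced_tail hu.
  exact: reduced_tail hv.
move: h => /= /(congr1 (mul2 (L (x.1, ~~ x.2)))).
by case: x {hu hv hx hy} => s e /=; rewrite !mul2A L_inv !mul1m2.
Qed.

Definition esum (S : eqType) (w : fg S) : int :=
  foldr (fun l n => (if l.2 then -1 else 1) + n) 0 w.

Lemma esum_push (S : eqType) (l : S * bool) w :
  esum (fg_push l w) = (if l.2 then -1 else 1) + esum w.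
Proof.
case: w => [|l' w] //=.
case: ifP => // /andP [_ h2].
have -> : l'.2 = ~~ l.2 by move: h2; case: (l'.2); case: (l.2).
by case: (l.2) => /=; ring.
Qed.

Lemma esum_mul (S : eqType) (u v : fg S) : esum (fg_mul u v) = esum u + esum v.
Proof.
rewrite /fg_mul; elim: u => /= [|l u IH].
  by rewrite add0r; elim: v => //= l v IH; rewrite esum_push IH.
by rewrite esum_push IH addrA.
Qed.

Lemma red1 (w : fg Sigma1) : fg_reduced w -> exists e, w = nseq (size w) (sc, e).
Proof.
elim: w => [|[[] e] w IH] /=; first by exists false.
case: w IH => [|[[] e'] w] IH /=; first by exists e.
move=> /andP [h1 /IH [e0 He0]] {IH}; exists e.
move: He0 => /= [He0' Hw]; subst e0.
by case: e h1 Hw; case: e' => //= _ Hw; rewrite {1}Hw.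
Qed.

Lemma esum_nseq k e : esum (nseq k (sc, e)) = if e then - (k%:Z) else k%:Z.
Proof. elim: k => [|k IH] /=; first by case: e. rewrite IH {IH}; case: e; lia. Qed.

Lemma esum_inj (u v : fg Sigma1) : fg_reduced u -> fg_reduced v -> esum u = esum v -> u = v.
Proof.
move=> /red1 [e He] /red1 [e' He']; rewrite He He' !esum_nseq; clear He He'.
case: e; case: e' => h; have hk : size u = size v by lia.
all: try by rewrite hk.
all: have h0 : size u = 0%N by lia.
all: by rewrite hk -hk h0.
Qed.

Lemma sg1 (u : seq Sigma1) : u = nseq (size u) sc.
Proof. by elim: u => //= [[]] u {1}->. Qed.

Definition scale2 (R : comPzRingType) (c : R) (x : m2 R) : m2 R :=
  M2 (c * e00 x) (c * e01 x) (c * e10 x) (c * e11 x).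

Lemma scale_inj (R : realDomainType) (c c' : R) (x x' : m2 R) :
  0 < c -> 0 < c' -> e00 x * e11 x - e01 x * e10 x = 1 ->
  e00 x' * e11 x' - e01 x' * e10 x' = 1 ->
  scale2 c x = scale2 c' x' -> c = c' /\ x = x'.
Proof.
case: x x' => [a b g d] [a' b' g' d'] /= hc hc' hd hd' [h1 h2 h3 h4].
have hcc : c * c = c' * c'.
  transitivity ((c * a) * (c * d) - (c * b) * (c * g)).
    by rewrite -[LHS]mulr1 -hd; ring.
  by rewrite h1 h2 h3 h4 -[RHS]mulr1 -hd'; ring.
have ec : c = c' by nra.
subst c'; split => //.
have hc0 : c != 0 := lt0r_neq0 hc.
by rewrite (mulfI hc0 h1) (mulfI hc0 h2) (mulfI hc0 h3) (mulfI hc0 h4).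
Qed.

Definition mapq (x : m2 int) : m2 rat :=
  M2 (e00 x)%:~R (e01 x)%:~R (e10 x)%:~R (e11 x)%:~R.

Lemma mapq_inj : injective mapq.
Proof.
move=> [a b g d] [a' b' g' d'] [/intr_inj -> /intr_inj -> /intr_inj -> /intr_inj ->].
done.
Qed.

Definition dig (s : Sigma2) : nat := if s is sa then 1%N else 2%N.
Definition val3 (w : seq Sigma2) : nat := foldr (fun s n => dig s + 3 * n)%N 0%N w.

Lemma val3_cat u v : val3 (u ++ v) = (val3 u + 3 ^ size u * val3 v)%N.
Proof. elim: u => /= [|x u ->]; first by rewrite expn0 mul1n. rewrite expnS; nia. Qed.

Lemma val3_inj u v : val3 u = val3 v -> u = v.
Proof.
elim: u v => [|x u IH] [|y v] //=.
- by case: y => /=; lia.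
- by case: x => /=; lia.
move=> h; have exy : x = y by case: x y h => [] [] //=; lia.
subst y; congr (_ :: _); apply: IH; case: x h => /=; lia.
Qed.

Definition f3 (a v n : int) (i j : nat) : int :=
  match i, j with
  | 0, 0 => a | 0, 1 => v | 1, 1 => 1 | 2, 1 => n | 2, 2 => 1 | _, _ => 0
  end%N.
Definition mx3 (a v n : int) : 'M[int]_3 := \matrix_(i < 3, j < 3) f3 a v n i j.

Lemma mx3M a v n a' v' n' : mx3 a v n *m mx3 a' v' n' = mx3 (a * a') (v + a * v') (n + n').
Proof.
apply/matrixP => i j; rewrite !mxE !big_ord_recr big_ord0 /= !mxE.
case: i => [[|[|[|//]]] ?]; case: j => [[|[|[|//]]] ?]; rewrite /f3 /=; ring.
Qed.

Theorem proposition5 :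
  (exists phi : sg Sigma1 * sg Sigma1 -> 'M[nat]_2,
      is_embedding (prod_valid (@sg_valid Sigma1) (@sg_valid Sigma1))
                   (prod_mul (@sg_mul Sigma1) (@sg_mul Sigma1))
                   is_UT2 (@mxmul _ 2) phi) /\
  (exists phi : fg Sigma2 * fg Sigma1 -> 'M[rat]_2,
      is_embedding (prod_valid (@fg_valid Sigma2) (@fg_valid Sigma1))
                   (prod_mul (@fg_mul Sigma2) (@fg_mul Sigma1))
                   (fun _ => True) (@mxmul _ 2) phi) /\
  (exists phi : sg Sigma2 * fg Sigma1 -> 'M[int]_3,
      is_embedding (prod_valid (@sg_valid Sigma2) (@fg_valid Sigma1))
                   (prod_mul (@sg_mul Sigma2) (@fg_mul Sigma1))
                   (fun _ => True) (@mxmul _ 3) phi) /\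
  (exists phi : fg Sigma2 * sg Sigma1 -> 'M[int]_2,
      is_embedding (prod_valid (@fg_valid Sigma2) (@sg_valid Sigma1))
                   (prod_mul (@fg_mul Sigma2) (@sg_mul Sigma1))
                   (fun _ => True) (@mxmul _ 2) phi).
Proof.
split; [|split; [|split]].
- exists (fun x => mx2 (M2 (2 ^ size x.1)%N 0%N 0%N (3 ^ size x.2)%N)); split.
  + by move=> [u v] _; rewrite /is_UT2 mxE.
  + move=> [u v] [u' v'] _ _; rewrite /prod_mul /mxmul /sg_mul /= -mx2M; congr mx2.
    rewrite /mul2 /= !size_cat !expnD; congr M2; ring.
  + move=> [u v] [u' v'] _ _ /mx2_inj [].
    move=> /(expnI (isT : (1 < 2)%N)) h1 /(expnI (isT : (1 < 3)%N)) h2.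
    by rewrite (sg1 u) (sg1 u') (sg1 v) (sg1 v') h1 h2.
- exists (fun x => mx2 (scale2 ((2 : rat) ^ esum x.2) (mapq (S2 x.1)))); split => //.
  + move=> [u z] [u' z'] _ _; rewrite /prod_mul /mxmul /= -mx2M; congr mx2.
    rewrite S2_mul esum_mul expfzDr //.
    case: (S2 u) (S2 u') => [a b g d] [a' b' g' d'].
    rewrite /scale2 /mapq /mul2 /=; congr M2; rewrite !intrD !intrM; ring.
  + move=> [u z] [u' z'] [/= hu hz] [/= hu' hz'] /mx2_inj /scale_inj [].
    * exact: exprz_gt0.
    * exact: exprz_gt0.
    * by have := S2_det u; rewrite /det2 /mapq /= => h; rewrite -!intrM -intrB h.
    * by have := S2_det u'; rewrite /det2 /mapq /= => h; rewrite -!intrM -intrB h.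
    move=> hc /mapq_inj /S2_inj h.
    have hz2 : esum z = esum z'.
      by apply: (@ieexprIz _ (2 : rat)) => //.
    by rewrite (h hu hu') (esum_inj hz hz' hz2).
- exists (fun x => mx3 (3 ^ size x.1)%N (val3 x.1) (esum x.2)); split => //.
  + move=> [u z] [u' z'] _ _; rewrite /prod_mul /mxmul /sg_mul /= mx3M.
    by rewrite size_cat expnD val3_cat esum_mul PoszD !PoszM.
  + move=> [u z] [u' z'] [_ hz] [_ hz'] /= h.
    have := congr1 (fun M : 'M[int]_3 => M 0 1) h; have := congr1 (fun M : 'M[int]_3 => M 2 1) h.
    rewrite !mxE /= => h2 [h1].
    move: (esum_inj hz hz' h2) (val3_inj h1) => /= -> ->.
    by [].
- exists (fun x => mx2 (scale2 (2 ^ size x.2)%N%:Z (S2 x.1))); split => //.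
  + move=> [u v] [u' v'] _ _; rewrite /prod_mul /mxmul /sg_mul /= -mx2M; congr mx2.
    rewrite S2_mul size_cat expnD PoszM.
    case: (S2 u) (S2 u') => [a b g d] [a' b' g' d'].
    rewrite /scale2 /mul2 /=; congr M2; ring.
  + move=> [u v] [u' v'] [/= hu _] [/= hu' _] /mx2_inj /scale_inj [].
    * by rewrite ltz_nat expn_gt0.
    * by rewrite ltz_nat expn_gt0.
    * exact: S2_det.
    * exact: S2_det.
    move=> [/(expnI (isT : (1 < 2)%N)) h1] /(S2_inj hu hu') ->.
    by rewrite (sg1 v) (sg1 v') h1.
Qed.
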